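(* Let $X \subseteq 2^\omega$ be nice. Then for every Borel function $x \mapsto Y^x$ from $2^\omega$ to $[\omega]^\omega$ there exists a set $Y = \{u_n : n \in \omega\} \subseteq \omega$ such that (1) $u_{n+1} \geq u_n + 2$ for all $n$, and (2) for every $x \in X$, the set $Y \cap Y^x$ is infinite.
   Context: $[\omega]^\omega$ denotes the set of infinite subsets of $\omega$, viewed as a subspace of $2^\omega$. A set $X \subseteq 2^\omega$ is nice if for every Borel function $x \mapsto f^x$ from $2^\omega$ to $\omega^\omega$ there exists $g \in \omega^\omega$ such that for every $x \in X$ there are infinitely many $n$ with $f^x(n) = g(n)$. *)

(* Defs.v *)
From HB Require Import structures.
From mathcomp Require Import all_boot all_order all_algebra.
From mathcomp Require Import all_classical all_reals all_analysis.
Set Implicit Arguments. Unset Strict Implicit. Unset Printing Implicit Defensive.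
Local Open Scope classical_set_scope.

Definition Cantor : Type := prod_topology (fun _ : nat => bool).
Definition Baire : Type := prod_topology (fun _ : nat => nat).

Definition borel (T : topologicalType) : set (set T) := <<s @open T >>.

Definition borel_fun (T U : topologicalType) (f : T -> U) : Prop :=
  forall B : set U, borel B -> borel (f @^-1` B).

Definition setof (x : Cantor) : set nat := [set n | x n = true].

Definition inf_subset (x : Cantor) : Prop := infinite_set (setof x).

Definition nice (X : set Cantor) : Prop :=
  forall f : Cantor -> Baire, borel_fun f ->
    exists g : nat -> nat, forall x, X x -> infinite_set [set n | f x n = g n].

(* Main.v *)
Require Import Defs.
From HB Require Import structures.
From mathcomp Require Import all_boot all_order all_algebra.
From mathcomp Require Import all_classical all_reals all_analysis.
From mathcomp Require Import zify.
Set Implicit Arguments. Unset Strict Implicit.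
Local Open Scope classical_set_scope.

Definition nextp (P : set nat) (m : nat) : nat :=
  xget 0%N [set k | (m <= k)%N /\ P k /\ forall j, (m <= j)%N -> (j < k)%N -> ~ P j].

Lemma nextp_spec P m : (exists k, (m <= k)%N /\ P k) ->
  [/\ (m <= nextp P m)%N, P (nextp P m) &
      forall j, (m <= j)%N -> (j < nextp P m)%N -> ~ P j].
Proof.
move=> [k [mk Pk]].
have ex : exists k, (m <= k) && `[< P k >].
  by exists k; rewrite mk /=; apply/asboolP.
case: (ex_minnP ex) => k0 /andP [mk0 /asboolP Pk0] Hmin.
have : exists x, [set k | (m <= k)%N /\ P k /\ forall j, (m <= j)%N -> (j < k)%N -> ~ P j] x.
  exists k0; split => //; split => // j mj jk Pj.
  have := Hmin j; rewrite mj /=.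
  have -> : `[< P j >] = true by apply/asboolP.
  move=> /(_ isT); lia.
move=> /(xgetPex 0%N) [h1 [h2 h3]]; split => //.
Qed.

Lemma nextp_eq P Q m K : (exists k, (m <= k)%N /\ P k) ->
  (nextp P m <= K)%N -> (forall j, (j <= K)%N -> (Q j <-> P j)) ->
  nextp Q m = nextp P m.
Proof.
move=> ex leK agr; have [h1 h2 h3] := nextp_spec ex.
apply: xget_unique.
  split => //; split; first by apply/agr.
  move=> j mj jk /agr; rewrite (_ : (j <= K)%N = true); last lia.
  move=> /(_ isT); exact: h3.
move=> y [my [Qy Hy]].
have [lt|ge] := ltnP y (nextp P m).
  exfalso; apply: (h3 y my lt); apply/agr => //; lia.
have [lt2|ge2] := ltnP (nextp P m) y.
  by exfalso; apply: (Hy _ h1 lt2); apply/agr.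
by apply/eqP; rewrite eqn_leq ge ge2.
Qed.

Fixpoint wseq (d : nat) (P : set nat) (i : nat) : nat :=
  match i with 0 => nextp P 0 | i'.+1 => nextp P (wseq d P i' + d) end.

Definition unb (P : set nat) := forall m, exists k, (m <= k)%N /\ P k.

Lemma wseq_spec d P i : unb P ->
  P (wseq d P i) /\ (wseq d P i + d <= wseq d P i.+1)%N.
Proof.
move=> uP; split.
  case: i => [|i] /=; first by have [] := nextp_spec (uP 0%N).
  by have [] := nextp_spec (uP (wseq d P i + d)%N).
by rewrite /=; have [] := nextp_spec (uP (wseq d P i + d)).
Qed.

Lemma wseq_mono d P i j : unb P -> (i < j)%N -> (wseq d P i + d <= wseq d P j)%N.
Proof.
move=> uP; elim: j => [//|j IH]; rewrite ltnS leq_eqVlt => /orP [/eqP ->|ij].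
  by have := (wseq_spec d j uP).2.
have := IH ij; have := (wseq_spec d j uP).2; lia.
Qed.

Lemma wseq_agree d P Q n : unb P ->
  (forall j, (j <= wseq d P n)%N -> (Q j <-> P j)) ->
  forall i, (i <= n)%N -> wseq d Q i = wseq d P i.
Proof.
move=> uP agr; elim => [|i IH] ilen /=.
  apply: nextp_eq; [exact: uP| |exact: agr].
  case: n agr ilen => [|n] agr _ //.
  have := wseq_mono d uP (ltn0Sn n) => /=; lia.
rewrite IH; last lia.
apply: nextp_eq; [exact: uP| |exact: agr].
have -> : nextp P (wseq d P i + d) = wseq d P i.+1 by [].
move: ilen; rewrite leq_eqVlt => /orP [/eqP ->//|lt].
have := wseq_mono d uP lt; lia.
Qed.

Lemma cylC_open (y : Cantor) (K : nat) :
  open [set z : Cantor | forall i, (i < K)%N -> z i = y i].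
Proof.
elim: K => [|K IH].
  rewrite (_ : [set z : Cantor | _] = setT); first exact: openT.
  by apply/seteqP; split => z //= _ i.
rewrite (_ : [set z : Cantor | _] = [set z : Cantor | forall i, (i < K)%N -> z i = y i] `&` (@proj nat (fun _ => bool) K @^-1` [set y K])).
  apply: openI => //.
  apply: open_comp; last exact: discrete_open.
  by move=> + _; exact: (@proj_continuous nat (fun _ => bool) K).
apply/seteqP; split => z /=.
  move=> H; split; first by move=> i iK; apply: H; rewrite ltnS ltnW.
  by rewrite /proj; apply: H.
move=> [H1 H2] i; rewrite ltnS leq_eqVlt => /orP [/eqP ->|iK]; last exact: H1.
exact: H2.
Qed.

Lemma baire_cyl (B : set Defs.Baire) (w : Defs.Baire) : open B -> B w ->
  exists N, forall z : Defs.Baire, (forall i, (i < N)%N -> z i = w i) -> B z.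
Proof.
move=> oB Bw.
pose G := filter_from [set: nat] (fun N => [set z : Defs.Baire | forall i, (i < N)%N -> z i = w i]).
have FG : Filter G.
  apply: filter_from_filter; first by exists 0%N.
  move=> i j _ _; exists (maxn i j) => // z /= H; split => k kl; apply: H;
  by rewrite leq_max kl ?orbT.
have : G --> w.
  apply/cvg_sup => i U [V] [[W] oW <-] WfN WU.
  apply: (filterS WU); exists i.+1 => // z /= H.
  by rewrite /= H.
move=> /(_ B); rewrite nbhs_simpl.
have : nbhs w B by apply: open_nbhs_nbhs.
move=> nB /(_ nB) [N _ HN]; exists N => z Hz; exact: HN.
Qed.

Definition cands (y : Cantor) (n : nat) : seq nat :=
  [seq wseq 3 (setof y) i | i <- iota 0 n.+1].
Definition Phi (y : Cantor) : Defs.Baire := fun n => pickle (cands y n).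

Lemma Phi_agree (y z : Cantor) N : unb (setof y) ->
  (forall i, (i < (wseq 3 (setof y) N).+1)%N -> z i = y i) ->
  forall n, (n < N)%N -> Phi z n = Phi y n.
Proof.
move=> uy agr n nN; rewrite /Phi /cands; congr pickle.
apply/eq_in_map => i; rewrite mem_iota add0n => /andP [_ iN].
apply: (wseq_agree (n:=N) uy); last lia.
move=> j jle; rewrite /setof /= agr //.
Qed.

Lemma open_pre (B : set Defs.Baire) : open B -> exists O : set Cantor,
  open O /\ forall y, unb (setof y) -> (O y <-> B (Phi y)).
Proof.
move=> oB.
exists [set z | exists y N, [/\ unb (setof y),
   (forall w : Defs.Baire, (forall i, (i < N)%N -> w i = Phi y i) -> B w) &
   (forall i, (i < (wseq 3 (setof y) N).+1)%N -> z i = y i)]].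
split.
  rewrite openE => z [y [N [uy HB Hz]]].
  have : open_nbhs z [set z' : Cantor | forall i, (i < (wseq 3 (setof y) N).+1)%N -> z' i = y i].
    split; [exact: cylC_open | exact: Hz].
  move=> /open_nbhs_nbhs; apply: filterS => z' Hz'.
  by exists y, N; split.
move=> y uy; split.
  move=> [y' [N [uy' HB Hz]]]; apply: HB => i iN.
  rewrite (Phi_agree uy' Hz iN) //.
move=> By; have [N HN] := baire_cyl oB By.
by exists y, N; split.
Qed.

Definition good_pre (B : set Defs.Baire) : Prop :=
  exists A : set Cantor, borel A /\ forall y, unb (setof y) -> (A y <-> B (Phi y)).

Lemma borel_pre (B : set Defs.Baire) : borel B -> good_pre B.
Proof.
have sub : (@borel Defs.Baire) `<=` good_pre.
  apply: smallest_sub.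
    split.
    - by exists set0; split; [exact: sigma_algebra0 | by move=> y _; split].
    - move=> C [A [bA HA]]; exists (setT `\` A); split.
        exact: sigma_algebraCD.
      move=> y uy; split => [[_ nA]|[_ nC]]; split => //.
        by move=> /HA => /(_ uy).
      by move=> /HA => /(_ uy).
    - move=> C HC.
      have [Af HAf] := @choice _ (set Cantor) (fun n A => borel A /\ forall y, unb (setof y) -> (A y <-> C n (Phi y))) HC.
      exists (\bigcup_n Af n); split.
        apply: sigma_algebra_bigcup => n; exact: (HAf n).1.
      move=> y uy; split => [[n _ An]|[n _ Cn]]; exists n => //.
        by apply/((HAf n).2 y uy).
      by apply/((HAf n).2 y uy).
  move=> C /open_pre [ O1 [oO1 HO1]].
  exists O1; split => //; exact: sub_sigma_algebra.
exact: sub.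
Qed.

Lemma mem_le_sumn (s : seq nat) k : k \in s -> (k <= sumn s)%N.
Proof. elim: s => //= a s IH; rewrite in_cons => /orP [/eqP ->|/IH]; lia. Qed.

Lemma inf_unbP (A : set nat) : infinite_set A -> unb A.
Proof.
move=> iA m; apply: contrapT => H; apply: iA.
apply: (sub_finite_set _ (finite_II m)) => k Ak /=.
by rewrite ltnNge; apply/negP => mk; apply: H; exists k.
Qed.

Lemma unb_inf (A : set nat) : unb A -> infinite_set A.
Proof.
move=> uA /finite_seqP [s sA]; have [k [sk Ak]] := uA (sumn s).+1.
move: Ak; rewrite sA /= => /mem_le_sumn; lia.
Qed.

Definition gapok (c t : nat) : bool := (t + 2 <= c)%N || (c + 2 <= t)%N.
Definition free (s : seq nat) (c : nat) : bool := all (gapok c) s.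
Definition pick (g : nat -> nat) (n : nat) (s : seq nat) : nat :=
  head (sumn s + 2)%N [seq c <- odflt [::] (@unpickle (seq nat) (g n)) | free s c].

Lemma pick_free g n s : free s (pick g n s).
Proof.
rewrite /pick; case E: [seq _ <- _ | _] => [|c l] /=.
  by apply/allP => t ts; rewrite /gapok; have := mem_le_sumn ts; lia.
have : c \in [seq c <- odflt [::] (@unpickle (seq nat) (g n)) | free s c].
  by rewrite E mem_head.
by rewrite mem_filter => /andP [].
Qed.

Lemma pick_mem g n s l : @unpickle (seq nat) (g n) = Some l -> has (free s) l ->
  pick g n s \in l.
Proof.
rewrite /pick => -> /=; rewrite has_filter.
case E: [seq _ <- _ | _] => [|c l'] //= _.
have : c \in [seq c <- l | free s c] by rewrite E mem_head.
by rewrite mem_filter => /andP [].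
Qed.

Lemma free_notin s c : free s c -> c \notin s.
Proof.
move=> /allP H; apply/negP => /H; rewrite /gapok; lia.
Qed.

Fixpoint stage (g : nat -> nat) (n : nat) : seq nat :=
  match n with 0 => [::] | n'.+1 => pick g n' (stage g n') :: stage g n' end.

Lemma stage_size g n : size (stage g n) = n.
Proof. by elim: n => //= n ->. Qed.

Lemma stage_uniq g n : uniq (stage g n).
Proof. by elim: n => //= n ->; rewrite free_notin // pick_free. Qed.

Lemma stage_mono g n m : (n <= m)%N -> {subset stage g n <= stage g m}.
Proof.
elim: m => [|m IH]; first by rewrite leqn0 => /eqP ->.
rewrite leq_eqVlt => /orP [/eqP ->//|]; rewrite ltnS => /IH H x /H xm.
by rewrite /= in_cons xm orbT.
Qed.

Lemma gapokC a b : gapok a b = gapok b a.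
Proof. by rewrite /gapok orbC. Qed.

Lemma stage_gap g n a b : a \in stage g n -> b \in stage g n -> a = b \/ gapok a b.
Proof.
elim: n => //= n IH; rewrite !in_cons => /orP [/eqP ->|ha] /orP [/eqP ->|hb].
- by left.
- by right; apply: (allP (pick_free g n (stage g n))).
- by right; rewrite gapokC; apply: (allP (pick_free g n (stage g n))).
- exact: IH.
Qed.

Definition Sset (g : nat -> nat) : set nat := [set c | exists n, c \in stage g n].

Lemma Sset_gap g a b : Sset g a -> Sset g b -> a <> b -> gapok a b.
Proof.
move=> [n ha] [m hb] ne.
have ha' := stage_mono (leq_maxl n m) ha.
have hb' := stage_mono (leq_maxr n m) hb.
by case: (stage_gap ha' hb').
Qed.

Lemma Sset_unb g : unb (Sset g).
Proof.
move=> m; case: (boolP (has (fun c => m <= c)%N (stage g m.+1))) => [/hasP [c cin cm] | /hasPn H].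
  by exists c; split => //; exists m.+1.
exfalso.
have : (size (stage g m.+1) <= size (iota 0 m))%N.
  apply: uniq_leq_size; first exact: stage_uniq.
  move=> c /H; rewrite mem_iota /= -ltnNge; lia.
by rewrite size_iota stage_size; lia.
Qed.

Definition u g k := wseq 1 (Sset g) k.

Lemma u_gap g k : (u g k + 2 <= u g k.+1)%N.
Proof.
have [h1 h2] := wseq_spec 1 k (Sset_unb g).
have [h3 _] := wseq_spec 1 k.+1 (Sset_unb g).
have ne : u g k <> u g k.+1 by rewrite /u; lia.
have := Sset_gap h1 h3 ne; rewrite /gapok /u; lia.
Qed.

Lemma u_ge g k : (k <= u g k)%N.
Proof. elim: k => // k IH; have := u_gap g k; lia. Qed.

Lemma u_range g c : Sset g c -> exists k, u g k = c.
Proof.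
move=> Sc.
suff H : forall k, (c <= u g k)%N -> exists j, u g j = c.
  exact: (H c (u_ge g c)).
elim => [|k IH] cle.
  have [h1 h2 h3] := nextp_spec (Sset_unb g 0).
  exists 0%N; apply/eqP; rewrite eqn_leq cle andbT.
  rewrite leqNgt; apply/negP => lt; exact: (h3 c (leq0n c) lt).

have [ck|kc] := leqP c (u g k); first exact: IH.
have [h1 h2 h3] := nextp_spec (Sset_unb g (u g k + 1)).
exists k.+1; apply/eqP; rewrite eqn_leq cle andbT.
rewrite leqNgt; apply/negP => lt.
apply: (h3 c _ lt Sc); lia.
Qed.

Lemma map_pairwise y a k : unb (setof y) ->
  pairwise (fun a b => a + 3 <= b)%N [seq wseq 3 (setof y) i | i <- iota a k].
Proof.
move=> uy; elim: k a => [|k IH] a //.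
rewrite [iota _ _]/= map_cons pairwise_cons IH andbT.
apply/allP => x /mapP [j]; rewrite mem_iota => /andP [aj _] ->.
exact: wseq_mono.
Qed.

Lemma cands_pairwise y n : unb (setof y) ->
  pairwise (fun a b => a + 3 <= b)%N (cands y n).
Proof. exact: map_pairwise. Qed.

Lemma count_near t l : pairwise (fun a b => a + 3 <= b)%N l ->
  (count (fun c => ~~ gapok c t) l <= 1)%N.
Proof.
elim: l => //= a l IH /andP [Hall Hp].
case: (boolP (gapok a t)) => /= Ha; first by rewrite add0n IH.
rewrite (@eq_in_count _ _ pred0) ?count_pred0 //.
move=> b bl /=; have := allP Hall b bl; move: Ha; rewrite /gapok; lia.
Qed.

Lemma count_notfree s l : pairwise (fun a b => a + 3 <= b)%N l ->
  (count (fun c => ~~ free s c) l <= size s)%N.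
Proof.
move=> Hp; elim: s => [|t s IH] /=.
  by elim: l {Hp} => //=.
rewrite (@eq_count _ _ (predU (fun c => ~~ gapok c t) (fun c => ~~ free s c))); last first.
  by move=> c /=; rewrite /free /= negb_and.
have := count_predUI (fun c => ~~ gapok c t) (fun c => ~~ free s c) l.
have := count_near t Hp; lia.
Qed.

Lemma exists_free s l : pairwise (fun a b => a + 3 <= b)%N l ->
  (size s < size l)%N -> has (free s) l.
Proof.
move=> Hp sl; rewrite has_count.
have := count_predC (free s) l.
have E : count (predC (free s)) l = count (fun c => ~~ free s c) l by apply: eq_count.
have := count_notfree s Hp; lia.
Qed.

Lemma sub_stage g (s : seq nat) : (forall c, c \in s -> Sset g c) ->
  exists N, {subset s <= stage g N}.
Proof.
elim: s => [|a s IH] H; first by exists 0%N.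
have [N HN] := IH (fun c cs => H c (@mem_behead _ (a :: s) c cs)).
have [m hm] := H a (mem_head a s).
exists (maxn N m) => c; rewrite in_cons => /orP [/eqP ->|cs].
  exact: stage_mono (leq_maxr N m) _ hm.
exact: stage_mono (leq_maxl N m) _ (HN c cs).
Qed.

Unset Implicit Arguments.
Set Strict Implicit.

Theorem lemma2p7 (X : set Cantor) :
  nice X ->
  forall F : Cantor -> Cantor,
    borel_fun F -> (forall x : Cantor, inf_subset (F x)) ->
    exists u : nat -> nat,
      (forall n : nat, (u n + 2 <= u n.+1)%N) /\
      (forall x : Cantor, X x -> infinite_set (range u `&` setof (F x))).
Proof.
move=> niceX F BF Finf.
have uF x : unb (setof (F x)) := inf_unbP (Finf x).
have Bf : borel_fun (fun x => Phi (F x)).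
  move=> B /borel_pre [A [bA HA]].
  have -> : (fun x => Phi (F x)) @^-1` B = F @^-1` A.
    by apply/seteqP; split => x; rewrite /preimage /= => h; apply/(HA _ (uF x)).
  exact: BF.
have [g Hg] := niceX _ Bf.
exists (u g); split; first exact: u_gap.
move=> x Xx /finite_seqP [s Hs].
have [N HN] : exists N, {subset s <= stage g N}.
  apply: sub_stage => c cs.
  have : (range (u g) `&` setof (F x)) c by rewrite Hs.
  move=> [[k _ <-] _].
  exact: (wseq_spec 1 k (Sset_unb g)).1.
have [n [Nn Cn]] := inf_unbP (Hg x Xx) N.
set l := cands (F x) n.
have hu : @unpickle (seq nat) (g n) = Some l by rewrite -Cn /Phi pickleK.
have hfree : has (free (stage g n)) l.
  apply: exists_free; first exact: cands_pairwise.
  by rewrite stage_size size_map size_iota.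
have pm := pick_mem hu hfree.
set c := pick g n (stage g n) in pm.
have cY : setof (F x) c.
  move: pm => /mapP [i _ ->]; exact: (wseq_spec 3 i (uF x)).1.
have cS : Sset g c by exists n.+1; rewrite /= mem_head.
have [k hk] := u_range cS.
have cs : c \in s.
  have : (range (u g) `&` setof (F x)) c by split => //; exists k.
  by rewrite Hs.
have := stage_mono Nn (HN c cs).
by move: (free_notin (pick_free g n (stage g n))) => /negP.
Qed.
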